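(* Let $A=kQ/I$ be a gentle algebra over an algebraically closed field $k$, with graph $\Gamma_A$ and with $Q_E$ as defined below. Then $Q_E$ is the quiver of the Brauer graph algebra with Brauer graph $\Gamma_A$ (multiplicity one at every vertex) and with cyclic ordering of the edges of $\Gamma_A$ around each vertex induced by the arrows in $Q_E$.
   Context: Gentle: $Q$ finite connected, $I$ admissible; each vertex has at most two incoming and at most two outgoing arrows; for each arrow $\alpha$ at most one arrow $\beta$ with $\alpha\beta\notin I$ and at most one $\gamma$ with $\gamma\alpha\notin I$; $I$ generated by paths of length 2; for each arrow $\alpha$ at most one $\delta$ with $\alpha\delta\in I$ and at most one $\varepsilon$ with $\varepsilon\alpha\in I$. Paths composed left to right. Let $\mathcal M$ be the set of nontrivial maximal paths of $(Q,I)$ (paths $p\notin I$ with $\alpha p, p\alpha\in I$ for all arrows $\alpha$), and $\overline{\mathcal M}$ be $\mathcal M$ together with trivial paths $e_i$ at vertices $i$ that are a sink with one incoming arrow, a source with one outgoing arrow, or have exactly one incoming arrow $\alpha$ and one outgoing arrow $\beta$ with $\alpha\beta\notin I$. $\Gamma_A$ has vertices $\nu(m)$, $m\in\overline{\mathcal M}$, and for each vertex $i$ of $Q$ an edge $E_i$ joining the vertices of the two elements of $\overline{\mathcal M}$ through $i$. $Q_E$ is the quiver with the vertices of $Q$ and with arrows those of $Q$ plus, for each $m\in\mathcal M$, a new arrow $\beta_m$ from $t(m)$ to $s(m)$; the arrows of $Q_E$ on $m$ together with $\beta_m$ determine a cyclic order of the edges $E_i$ ($i$ on $m$) around $\nu(m)$,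 and $\nu(e_i)$ carries only $E_i$. Quiver of a Brauer graph algebra: for a Brauer graph $\Gamma$ (finite connected graph with cyclic ordering of edges around each vertex and multiplicities), the quiver has one vertex $i$ per edge $E_i$ and an arrow $i\to j$ whenever $E_j$ is the direct successor of $E_i$ in the cyclic ordering around a common vertex; for a leaf edge whose leaf vertex has multiplicity one no loop is added. *)

(* Defs.v *)
From mathcomp Require Import all_boot all_algebra.
Set Implicit Arguments. Unset Strict Implicit. Unset Printing Implicit Defensive.

(* A finite quiver with a set of length-2 zero relations.
   grel a b = true  means  the path  a b  (left-to-right composition) is one of
   the generators of I. *)
Record bquiver := BQuiver {
  qV : finType;
  qA : finType;
  qs : qA -> qV;
  qt : qA -> qV;
  grel : qA -> qA -> bool
}.

Section Gentle.
Variable Q : bquiver.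
Local Notation V := (qV Q).
Local Notation Ar := (qA Q).
Local Notation s := (@qs Q).
Local Notation t := (@qt Q).
Local Notation rel := (@grel Q).

Definition composable (p : seq Ar) : bool :=
  if p is a :: p' then path (fun x y => t x == s y) a p' else true.

(* a composable path lies outside I (I is generated by the length-2 paths in
   grel, hence monomial: a path is in I iff it contains a generator) *)
Definition nonzero_path (p : seq Ar) : bool :=
  if p is a :: p' then path (fun x y => ~~ rel x y) a p' else true.

Definition indeg (i : V) := #|[pred a : Ar | t a == i]|.
Definition outdeg (i : V) := #|[pred a : Ar | s a == i]|.

Definition connected_quiver : Prop :=
  forall i j : V,
    connect [rel x y : V | [exists a : Ar,
        ((s a == x) && (t a == y)) || ((s a == y) && (t a == x))]] i j.

(* admissible: I is generated by paths of length 2 (so I is contained in R^2),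
   and R^N is contained in I for some N *)
Definition admissible : Prop :=
  exists N : nat, forall p : seq Ar,
    N <= size p -> composable p -> ~~ nonzero_path p.

Definition gentle : Prop :=
  [/\ connected_quiver,
      (forall a b, rel a b -> t a = s b),
      admissible &
   [/\
      (forall i, indeg i <= 2 /\ outdeg i <= 2),
      (forall a, #|[pred b | (t a == s b) && ~~ rel a b]| <= 1 /\
                 #|[pred c | (t c == s a) && ~~ rel c a]| <= 1) &
      (forall a, #|[pred d | rel a d]| <= 1 /\ #|[pred e | rel e a]| <= 1)]].

(* Paths of Q: a starting vertex together with a sequence of arrows.
   (i, [::]) is the trivial path e_i. *)
Definition qpath := (V * seq Ar)%type.

Definition good_path (x : qpath) : bool :=
  [&& (if x.2 is a :: _ then s a == x.1 else true),
      composable x.2 & nonzero_path x.2].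

Definition psource (x : qpath) : V := x.1.
Definition ptarget (x : qpath) : V := last x.1 (map t x.2).
Definition pverts (x : qpath) : seq V := x.1 :: map t x.2.

Definition is_max (x : qpath) : bool :=
  if x.2 is a :: p' then
    [&& good_path x,
        [forall al : Ar, (t al == s a) ==> rel al a] &
        [forall al : Ar, (s al == t (last a p')) ==> rel (last a p') al]]
  else false.

(* vertices i whose trivial path e_i belongs to Mbar *)
Definition triv_cond (i : V) : bool :=
  [|| (outdeg i == 0) && (indeg i == 1),
      (indeg i == 0) && (outdeg i == 1) |
      [&& indeg i == 1, outdeg i == 1 &
          [exists a : Ar, exists b : Ar,
              [&& t a == i, s b == i & ~~ rel a b]]]].

Definition in_Mbar (x : qpath) : bool :=
  if x.2 is [::] then triv_cond x.1 else is_max x.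

Definition GVert := {x : qpath | in_Mbar x}.
(* half-edges: an element m of Mbar together with a position j on m;
   the half-edge (m, j) belongs to the edge E_i, i = j-th vertex of m *)
Definition GHalf := {h : qpath * nat | in_Mbar h.1 && (h.2 < size (pverts h.1))}.

Lemma ghalf_vert (h : GHalf) : in_Mbar (sval h).1.
Proof. by case/andP: (valP h). Qed.

Definition gv (h : GHalf) : GVert := exist _ (sval h).1 (ghalf_vert h).
Definition ge (h : GHalf) : V := nth (sval h).1.1 (pverts (sval h).1) (sval h).2.

Lemma gsucc_proof (h : GHalf) :
  in_Mbar (sval h).1 &&
  ((((sval h).2).+1 %% size (pverts (sval h).1)) < size (pverts (sval h).1)).
Proof. by rewrite ghalf_vert ltn_pmod. Qed.

(* cyclic order around nu(m) induced by the arrows of Q_E: the arrows of m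
   followed by beta_m (from t(m) back to s(m)) *)
Definition gsucc (h : GHalf) : GHalf :=
  exist _ ((sval h).1, (((sval h).2).+1 %% size (pverts (sval h).1)))
        (gsucc_proof h).

Definition QEArrow := (Ar + {x : qpath | is_max x})%type.
Definition qe_src (a : QEArrow) : V :=
  match a with inl al => s al | inr m => ptarget (sval m) end.
Definition qe_tgt (a : QEArrow) : V :=
  match a with inl al => t al | inr m => psource (sval m) end.

End Gentle.

(* hv h = vertex of the half-edge h, he h = edge containing h,
   succ = cyclic successor of half-edges around each vertex, mult = multiplicity *)
Definition brauer_graph {BV BH BE : Type} (hv : BH -> BV) (he : BH -> BE)
    (succ : BH -> BH) (mult : BV -> nat) : Prop :=
  ([/\
      (forall e, exists h1 h2, [/\ h1 <> h2, he h1 = e, he h2 = e &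
                  forall h, he h = e -> h = h1 \/ h = h2]),
      bijective succ,
      (forall h, hv (succ h) = hv h),
      (forall h h', hv h = hv h' -> exists n, iter n succ h = h') &
      (forall v, 0 < mult v) /\
      (forall P : BV -> Prop,
         (forall h h', he h = he h' -> P (hv h) -> P (hv h')) ->
         forall v w, P v -> P w)]).

(* arrows of the quiver of the Brauer graph algebra: one arrow
   he h -> he (succ h) for every half-edge h, except at a leaf vertex
   (exactly one half-edge) of multiplicity one *)
Definition brauer_arrow {BV BH : Type} (hv : BH -> BV) (mult : BV -> nat) :=
  {h : BH | ~ (mult (hv h) = 1 /\ forall h', hv h' = hv h -> h' = h)}.

Definition ba_src {BV BH BE : Type} (hv : BH -> BV) (he : BH -> BE)
   (mult : BV -> nat) (a : brauer_arrow hv mult) : BE := he (sval a).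
Definition ba_tgt {BV BH BE : Type} (hv : BH -> BV) (he : BH -> BE)
   (succ : BH -> BH) (mult : BV -> nat) (a : brauer_arrow hv mult) : BE :=
  he (succ (sval a)).

Definition same_quiver {A1 A2 W : Type} (s1 t1 : A1 -> W) (s2 t2 : A2 -> W) : Prop :=
  exists f : A1 -> A2, bijective f /\ forall a, s2 (f a) = s1 a /\ t2 (f a) = t1 a.

(* Main.v *)
Require Import Defs.
From mathcomp Require Import all_boot all_algebra zify.
From Stdlib Require Import Lia ProofIrrelevance ClassicalEpsilon.
Set Implicit Arguments. Unset Strict Implicit. Unset Printing Implicit Defensive.

Section G.
Variable Q : bquiver.
Hypothesis HQ : gentle Q.
Local Notation V := (qV Q).
Local Notation Ar := (qA Q).
Local Notation s := (@qs Q).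
Local Notation t := (@qt Q).
Local Notation grl := (@Defs.grel Q).

Definition E : rel Ar := fun x y => (t x == s y) && ~~ grl x y.
Definition init (a : Ar) := [forall c, (t c == s a) ==> grl c a].
Definition term (a : Ar) := [forall b, (s b == t a) ==> grl a b].

Lemma initP a c : init a -> E c a -> False.
Proof. by move=> /forallP/(_ c); rewrite /E; case: (t c == s a); case: grl. Qed.
Lemma termP a b : term a -> E a b -> False.
Proof. by move=> /forallP/(_ b); rewrite /E eq_sym; case: (t a == s b); case: grl. Qed.
Lemma initPn a : ~~ init a -> exists c, E c a.
Proof. move/forallPn=> [c]; rewrite negb_imply /E => /andP[H1 H2]; exists c; by rewrite H1 H2. Qed.
Lemma termPn a : ~~ term a -> exists b, E a b.
Proof. move/forallPn=> [b]; rewrite negb_imply /E => /andP[H1 H2]; exists b; by rewrite eq_sym H1 H2. Qed.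

Lemma is_maxE v L : is_max (v, L) =
  if L is a :: p then [&& s a == v, path E a p, init a & term (last a p)] else false.
Proof.
case: L => [|a p] //=; rewrite /good_path /=.
have -> : path E a p = composable (a :: p) && nonzero_path (a :: p).
  by rewrite /= -path_relI.
rewrite /is_max /good_path /init /term /=; by case: (s a == v); case: (path _ a p); case: (path _ a p).
Qed.

Lemma rel_st a b : grl a b -> t a = s b.
Proof. by case: HQ => _ H _ _; apply: H. Qed.

Lemma le1_eq (T : finType) (P : pred T) x y : #|P| <= 1 -> P x -> P y -> x = y.
Proof. by move/card_le1_eqP => H Px Py; apply: H. Qed.

Lemma E_r a b b' : E a b -> E a b' -> b = b'.
Proof.
case: HQ => _ _ _ [_ H _]; have [H1 _] := H a.
by apply: (le1_eq H1).
Qed.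
Lemma E_l a c c' : E c a -> E c' a -> c = c'.
Proof.
case: HQ => _ _ _ [_ H _]; have [_ H1] := H a.
by apply: (le1_eq H1).
Qed.
Lemma rel_r a d d' : grl a d -> grl a d' -> d = d'.
Proof. case: HQ => _ _ _ [_ _ H]; have [H1 _] := H a. by apply: (le1_eq H1). Qed.
Lemma rel_l a e e' : grl e a -> grl e' a -> e = e'.
Proof. case: HQ => _ _ _ [_ _ H]; have [_ H1] := H a. by apply: (le1_eq H1). Qed.

Lemma fwd_uniq (T : Type) (e : T -> T -> bool) :
  (forall a b b', e a b -> e a b' -> b = b') ->
  forall a p q, path e a p -> path e a q ->
  (forall b, ~ e (last a p) b) -> (forall b, ~ e (last a q) b) -> p = q.
Proof.
move=> Hf a p; elim: p a => [|b p IH] a [|c q] //= Hp Hq H1 H2.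
- by case/andP: Hq => Hc _; case: (H1 c).
- by case/andP: Hp => Hb _; case: (H2 b).
- case/andP: Hp => Hb Hp; case/andP: Hq => Hc Hq.
  have ebc := Hf _ _ _ Hb Hc; subst c; congr (_ :: _); exact: IH Hp Hq H1 H2.
Qed.

Lemma last_rev (T : Type) (x : T) L : last x (rev L) = head x L.
Proof. by case: L => //= a L; rewrite rev_cons last_rcons. Qed.

Lemma split_uniq al L1 L2 L1' L2' :
  sorted E (L1 ++ al :: L2) -> init (head al L1) -> term (last al L2) ->
  sorted E (L1' ++ al :: L2') -> init (head al L1') -> term (last al L2') ->
  L1 = L1' /\ L2 = L2'.
Proof.
rewrite !sorted_cat_cons => /andP[S1 S2] I1 T1 /andP[S1' S2'] I1' T1'.
split; last first.
  apply: (fwd_uniq (e := E)) S2 S2' _ _.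
  - exact: E_r.
  - by move=> b; apply: termP.
  - by move=> b; apply: termP.
have R1 : path (fun x y => E y x) al (rev L1).
  by have := S1; rewrite -rev_sorted rev_rcons.
have R1' : path (fun x y => E y x) al (rev L1').
  by have := S1'; rewrite -rev_sorted rev_rcons.
have H : rev L1 = rev L1'.
  apply: (fwd_uniq (e := fun x y => E y x)) R1 R1' _ _.
  - by move=> a b b' Hb Hb'; apply: E_l Hb Hb'.
  - by move=> b; rewrite last_rev; apply: initP.
  - by move=> b; rewrite last_rev; apply: initP.
by rewrite -(revK L1) H revK.
Qed.

Lemma adm_bound : exists N, forall a p, path E a p -> size p < N.
Proof.
case: HQ => _ _ [N HN] _; exists N => a p Hp.
have : ~~ (N <= size (a :: p)).
  apply/negP => HN'; have := HN _ HN'.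
  have : composable (a :: p) && nonzero_path (a :: p) by rewrite /= -path_relI.
  by case/andP => HC HNZ /(_ HC); rewrite HNZ.
by rewrite -ltnNge /= => /ltnW.
Qed.

Lemma exists_max al : exists L1 L2,
  [/\ sorted E (L1 ++ al :: L2), init (head al L1) & term (last al L2)].
Proof.
have [N HN] := adm_bound.
suff: forall d L1 L2, sorted E (L1 ++ al :: L2) -> N <= size L1 + size L2 + d ->
  exists L1 L2, [/\ sorted E (L1 ++ al :: L2), init (head al L1) & term (last al L2)].
  by move/(_ N [::] [::]); apply => //; rewrite add0n.
elim=> [|d IH] L1 L2 HS Hd.
  exfalso; case: L1 HS Hd => [|b L1] /= HS Hd.
    by have := HN _ _ HS; lia.
  by have := HN _ _ HS; rewrite size_cat /=; lia.
case Ht: (term (last al L2)); last first.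
  have [b Hb] := termPn (negbT Ht).
  apply: (IH L1 (rcons L2 b)).
    by move: HS; rewrite !sorted_cat_cons rcons_path Hb andbT.
  by rewrite size_rcons; lia.
case Hi: (init (head al L1)); first by exists L1, L2.
have [c Hc] := initPn (negbT Hi).
apply: (IH (c :: L1) L2) => /=; last by lia.
by case: L1 HS Hc Hi {Hd} => [|b L1] /= HS -> .
Qed.

Lemma is_maxE2 x0 (m : qpath Q) : m.2 != [::] ->
  is_max m = [&& s (head x0 m.2) == m.1, sorted E m.2, init (head x0 m.2) & term (last x0 m.2)].
Proof. by case: m => v [|a p] //= _; rewrite is_maxE. Qed.

Lemma in_MbarE (m : qpath Q) : m.2 != [::] -> in_Mbar m = is_max m.
Proof. by case: m => v [|a p]. Qed.

Lemma is_max_ne (m : qpath Q) : is_max m -> m.2 != [::].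
Proof. by case: m => v [|a p]. Qed.

Lemma pv_nth_s x0 (m : qpath Q) j : is_max m -> j < size m.2 ->
  nth m.1 (pverts m) j = s (nth x0 m.2 j).
Proof.
move=> Hm Hj; have Hne := is_max_ne Hm.
move: Hm; rewrite (is_maxE2 x0 Hne) => /and4P[Hs HS _ _].
case: j Hj => [|j] Hj /=.
  by case: (m.2) Hne Hs => [|a p] //= _ /eqP.
rewrite (nth_map x0) ?(ltnW Hj) //.
by case/andP: ((sortedP x0 HS) j Hj) => /eqP.
Qed.

Lemma pv_nth_t x0 (m : qpath Q) j : j < size m.2 ->
  nth m.1 (pverts m) j.+1 = t (nth x0 m.2 j).
Proof. by move=> Hj /=; rewrite (nth_map x0). Qed.

Lemma pv_last (m : qpath Q) : nth m.1 (pverts m) (size m.2) = ptarget m.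
Proof.
rewrite /ptarget /pverts; case: m => v p /=.
elim/last_ind: p => [|p a _] //=.
by rewrite size_rcons map_rcons last_rcons -cats1 -cat_cons nth_cat /= size_map ltnn subnn.
Qed.

Lemma size_pv (m : qpath Q) : size (pverts m) = (size m.2).+1.
Proof. by rewrite /= size_map. Qed.

Lemma ghalf_eq (h h' : GHalf Q) : sval h = sval h' -> h = h'.
Proof.
case: h h' => x Hx [y Hy] /= Exy; subst y; congr exist; exact: bool_irrelevance.
Qed.

Lemma split_at (al : Ar) L j : j < size L -> nth al L j = al ->
  L = take j L ++ al :: drop j.+1 L.
Proof. by move=> Hj Hn; rewrite -{1}(cat_take_drop j L) (drop_nth al Hj) Hn. Qed.

Lemma head_split (al : Ar) L1 L2 : head al (L1 ++ al :: L2) = head al L1.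
Proof. by case: L1. Qed.
Lemma last_split (al : Ar) L1 L2 : last al (L1 ++ al :: L2) = last al L2.
Proof. by rewrite last_cat /=; case: L1 => //= b L1; rewrite last_cat. Qed.

Lemma pos_uniq (m m' : qpath Q) j j' al : is_max m -> is_max m' ->
  j < size m.2 -> j' < size m'.2 -> nth al m.2 j = al -> nth al m'.2 j' = al ->
  m = m' /\ j = j'.
Proof.
move=> Hm Hm' Hj Hj' Hn Hn'.
have Ne := is_max_ne Hm; have Ne' := is_max_ne Hm'.
move: Hm Hm'; rewrite (is_maxE2 al Ne) (is_maxE2 al Ne').
have E1 := split_at Hj Hn; have E2 := split_at Hj' Hn'.
rewrite {1 2 3 4}E1 {1 2 3 4}E2 !head_split !last_split.
move=> /and4P[/eqP s1 S1 I1 T1] /and4P[/eqP s2 S2 I2 T2].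
have [H1 H2] := split_uniq S1 I1 T1 S2 I2 T2.
have Ejj : j = j'.
  by have := congr1 size H1; rewrite !size_take Hj Hj'.
have Em : m.2 = m'.2 by rewrite E1 E2 H1 H2.
split=> //; case: m m' Em s1 s2 {Ne Ne' E1 E2 Hj Hj' Hn Hn' H1 H2 S1 S2 I1 I2 T1 T2} => [v L] [v' L'] /= ->.
by rewrite Ejj => <- <-.
Qed.

Lemma exists_half al : exists (m : qpath Q) j,
  [/\ is_max m, j < size m.2 & nth al m.2 j = al].
Proof.
have [L1 [L2 [HS HI HT]]] := exists_max al.
exists (s (head al L1), L1 ++ al :: L2), (size L1); split => /=.
- rewrite (is_maxE2 al) /=; last by case: L1 {HS HI HT}.
  by rewrite head_split last_split eqxx HS HI HT.
- by rewrite size_cat /= addnS ltnS leq_addr.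
- by rewrite nth_cat ltnn subnn.
Qed.

Lemma gvert_eq (v w : GVert Q) : sval v = sval w -> v = w.
Proof. case: v w => x Hx [y Hy] /= Exy; subst y; congr exist; exact: bool_irrelevance. Qed.

Definition mkH (m : qpath Q) j (H : in_Mbar m && (j < size (pverts m))) : GHalf Q :=
  exist _ (m, j) H.

Lemma leaf_uniq (h : GHalf Q) : (sval h).1.2 = [::] ->
  forall h', gv h' = gv h -> h' = h.
Proof.
move=> Hn h' Hg; have Em : (sval h').1 = (sval h).1 by have := congr1 sval Hg.
apply: ghalf_eq.
case: h h' Hn Hg Em => [[m j] /= /andP[_ Hj]] [[m' j'] /= /andP[_ Hj']] /= Hn _ Em.
subst m'; move: Hj Hj'; rewrite /= size_map Hn.
by case: j => // ; case: j'.
Qed.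

Lemma nonleaf (h : GHalf Q) : (sval h).1.2 != [::] ->
  ~ (1 = 1 /\ forall h', gv h' = gv h -> h' = h).
Proof.
move=> Hn [_ H].
have Hv := ghalf_vert h.
have P0 : in_Mbar (sval h).1 && (0 < size (pverts (sval h).1)) by rewrite Hv size_pv.
have P1 : in_Mbar (sval h).1 && (1 < size (pverts (sval h).1)).
  by rewrite Hv size_pv ltnS lt0n size_eq0.
have E0 := H (mkH P0) (gvert_eq (v:=gv (mkH P0)) (w:=gv h) erefl).
have E1 := H (mkH P1) (gvert_eq (v:=gv (mkH P1)) (w:=gv h) erefl).
by have := congr1 (fun x => (sval x).2) (etrans E0 (esym E1)).
Qed.

Definition BA := brauer_arrow (@gv Q) (fun _ : GVert Q => 1%N).

Definition RR (a : QEArrow Q) (b : BA) : Prop :=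
  let h := sval (sval b) in
  match a with
  | inl al => h.2 < size h.1.2 /\ nth al h.1.2 h.2 = al
  | inr x => h.1 = sval x /\ h.2 = size h.1.2
  end.

Lemma ba_eq (b b' : BA) : sval b = sval b' -> b = b'.
Proof. case: b b' => x Hx [y Hy] /= Exy; subst y; congr exist; exact: proof_irrelevance. Qed.

Lemma ba_max (b : BA) : is_max (sval (sval b)).1.
Proof.
have Hn : (sval (sval b)).1.2 != [::].
  by apply/negP => /eqP Hn; apply: (svalP b); split=> //; apply: leaf_uniq.
by rewrite -in_MbarE // ghalf_vert.
Qed.

Lemma RR_st a b : RR a b ->
  @ba_src _ _ _ (@gv Q) (@Defs.ge Q) (fun _ : GVert Q => 1%N) b = qe_src a /\
  @ba_tgt _ _ _ (@gv Q) (@Defs.ge Q) (@gsucc Q) (fun _ : GVert Q => 1%N) b = qe_tgt a.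
Proof.
have Hm := ba_max b.
rewrite /ba_src /ba_tgt /Defs.ge /gsucc /=.
case: b Hm => [[[m j] Hh] Hb] /= Hm; rewrite size_map /RR /=.
case: a => [al|[x Hx]] /= [H1 H2].
  rewrite modn_small ?ltnS //; split.
    by rewrite (pv_nth_s al) // H2.
  by rewrite (pv_nth_t al) // H2.
subst m; rewrite H2 modnn; split=> //.
by have := pv_last x.
Qed.

Lemma RR_ex_b a : exists b, RR a b.
Proof.
case: a => [al|[x Hx]].
  have [m [j [Hm Hj Hn]]] := exists_half al.
  have P : in_Mbar m && (j < size (pverts m)).
    by rewrite in_MbarE ?(is_max_ne Hm) // Hm size_pv ltnW.
  have Hb : ~ (1 = 1 /\ forall h', gv h' = gv (mkH P) -> h' = mkH P).
    by apply: nonleaf; apply: is_max_ne Hm.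
  by exists (exist _ (mkH P) Hb).
have P : in_Mbar x && (size x.2 < size (pverts x)).
  by rewrite in_MbarE ?(is_max_ne Hx) // Hx size_pv ltnSn.
have Hb : ~ (1 = 1 /\ forall h', gv h' = gv (mkH P) -> h' = mkH P).
  by apply: nonleaf; apply: is_max_ne Hx.
by exists (exist _ (mkH P) Hb).
Qed.

Lemma RR_ex_a b : exists a, RR a b.
Proof.
have Hm := ba_max b.
case: b Hm => [[[m j] Hh] Hb] /= Hm; rewrite /RR /=.
have Hj : j < (size m.2).+1 by move: (Hh); case/andP; rewrite size_pv.
have Hne := is_max_ne Hm.
case: ltnP => Hjs.
  case E2: m.2 Hne Hjs => [|x0 L] //= _ Hjs.
  exists (inl (nth x0 (x0 :: L) j)) => /=; split => //.
  by apply: set_nth_default.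
exists (inr (exist _ m Hm)) => /=; split => //.
by apply/eqP; rewrite eqn_leq Hjs -ltnS Hj.
Qed.

Lemma RR_fun a b b' : RR a b -> RR a b' -> b = b'.
Proof.
move=> H H'; apply: ba_eq; apply: ghalf_eq.
have Hm := ba_max b; have Hm' := ba_max b'.
move: H H' Hm Hm'; rewrite /RR.
case: a => [al|[x Hx]] /= [H1 H2] [H1' H2'] Hm Hm'.
  have [E1 E2] := pos_uniq Hm Hm' H1 H1' H2 H2'.
  by move: E1 E2; case: (sval (sval b)) => [? ?]; case: (sval (sval b')) => [? ?] /= -> ->.
move: H1 H1' H2 H2'; case: (sval (sval b)) => [m j]; case: (sval (sval b')) => [m' j'] /=.
by move=> -> -> -> ->.
Qed.

Lemma RR_inj a a' b : RR a b -> RR a' b -> a = a'.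
Proof.
rewrite /RR; case: a => [al|[x Hx]]; case: a' => [al'|[x' Hx']] /= [H1 H2] [H1' H2'].
- by have := set_nth_default al' al H1; rewrite H2 H2' => ->.
- by rewrite H2' ltnn in H1.
- by rewrite H2 ltnn in H1'.
- congr inr; apply: val_inj => /=; by rewrite -H1 -H1'.
Qed.

Lemma gsuccE (h : GHalf Q) : sval (gsucc h) = ((sval h).1, ((sval h).2).+1 %% size (pverts (sval h).1)).
Proof. by []. Qed.

Lemma iter_gsucc n (h : GHalf Q) : sval (iter n (@gsucc Q) h) =
  ((sval h).1, ((sval h).2 + n) %% size (pverts (sval h).1)).
Proof.
elim: n => [|n IH] /=.
  by rewrite addn0 modn_small; [case: (sval h)|case/andP: (svalP h)].
rewrite IH /=; set S := (size _).+1; by rewrite -[((_ + n) %% S).+1]addn1 modnDml -addnA addn1.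
Qed.

Lemma gpred_proof (h : GHalf Q) : in_Mbar (sval h).1 &&
  (((sval h).2 + (size (sval h).1.2)) %% size (pverts (sval h).1) < size (pverts (sval h).1)).
Proof. by rewrite ghalf_vert ltn_pmod // size_pv. Qed.

Definition gpred (h : GHalf Q) : GHalf Q := mkH (gpred_proof h).

Lemma gsucc_bij : bijective (@gsucc Q).
Proof.
exists gpred => h; apply: ghalf_eq; rewrite ?gsuccE /=.
- case: h => [[m j] /= /andP[_ Hj]] /=; congr pair.
  rewrite size_map in Hj *; by rewrite modnDml addSnnS modnDr modn_small.
- case: h => [[m j] /= /andP[_ Hj]] /=; congr pair.
  rewrite size_map in Hj *; set S := (size m.2).+1.
  by rewrite -[(_ %% S).+1]addn1 modnDml -addnA addn1 modnDr modn_small.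
Qed.

Lemma gv_succ (h : GHalf Q) : gv (gsucc h) = gv h.
Proof. by apply: gvert_eq. Qed.

Lemma gv_trans (h h' : GHalf Q) : gv h = gv h' -> exists n, iter n (@gsucc Q) h = h'.
Proof.
move=> Hg; have Em : (sval h).1 = (sval h').1 by have := congr1 sval Hg.
exists ((sval h').2 + (size (pverts (sval h).1) - (sval h).2)).
apply: ghalf_eq; rewrite iter_gsucc.
case: h h' Hg Em => [[m j] /= /andP[_ Hj]] [[m' j'] /= /andP[_ Hj']] _ /= Em.
subst m'; congr pair.
set S := (size _).+1 in Hj Hj' *; have -> : j + (j' + (S - j)) = j' + S by lia. by rewrite modnDr modn_small.
Qed.

Definition slot := ((Ar + Ar) + unit)%type.
Definition valid (i : V) (x : slot) : bool :=
  match x with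
  | inl (inl a) => t a == i
  | inl (inr b) => (s b == i) && init b
  | inr _ => triv_cond i
  end.

Definition RSl (i : V) (x : slot) (h : GHalf Q) : Prop :=
  [/\ valid i x, Defs.ge h = i &
  let m := (sval h).1 in let j := (sval h).2 in
  match x with
  | inl (inl a) => [/\ 0 < j, j.-1 < size m.2 & nth a m.2 j.-1 = a]
  | inl (inr b) => [/\ j = 0, 0 < size m.2 & nth b m.2 0 = b]
  | inr _ => m.2 = [::]
  end].

Lemma geE (h : GHalf Q) : Defs.ge h = nth (sval h).1.1 (pverts (sval h).1) (sval h).2.
Proof. by []. Qed.

Lemma half_max (h : GHalf Q) : (sval h).1.2 != [::] -> is_max (sval h).1.
Proof. by move=> Hn; rewrite -in_MbarE // ghalf_vert. Qed.

Lemma half_lt (h : GHalf Q) : (sval h).2 <= size (sval h).1.2.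
Proof. by case/andP: (svalP h); rewrite size_pv. Qed.

Lemma RS_ex_h i x : valid i x -> exists h, RSl i x h.
Proof.
case: x => [[a|b]|[]] /= Hv.
- have [m [j [Hm Hj Hn]]] := exists_half a.
  have P : in_Mbar m && (j.+1 < size (pverts m)).
    by rewrite in_MbarE ?(is_max_ne Hm) // Hm size_pv.
  exists (mkH P); split => //=.
  by rewrite geE /= (nth_map a) // Hn (eqP Hv).
- case/andP: Hv => /eqP Hs Hi.
  have [m [j [Hm Hj Hn]]] := exists_half b.
  have Hj0 : j = 0.
    case: j Hj Hn => // j Hj Hn; exfalso.
    have Hne := is_max_ne Hm; move: Hm; rewrite (is_maxE2 b Hne) => /and4P[_ HS _ _].
    have := (sortedP b HS) j Hj; rewrite Hn; exact: initP.
  subst j.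
  have P : in_Mbar m && (0 < size (pverts m)).
    by rewrite in_MbarE ?(is_max_ne Hm) // Hm size_pv.
  exists (mkH P); split => //=.
    by rewrite Hs eqxx Hi.
  by have := pv_nth_s b Hm Hj; rewrite Hn Hs /= => <-.
- have P : in_Mbar (i, [::]) && (0 < size (pverts (i, [::]))) by rewrite /in_Mbar /= Hv.
  by exists (mkH P); split.
Qed.

Lemma RS_ex_x i (h : GHalf Q) : Defs.ge h = i -> exists x, RSl i x h.
Proof.
move=> Hg; have Hl := half_lt h; have Hv := ghalf_vert h.
case En: ((sval h).1.2) => [|b0 L].
  exists (inr tt); split => //=.
  move: Hv Hg Hl; rewrite geE /in_Mbar En /=; case: (sval h) En => [[v p] j] /= -> /=.
  by case: j => //= H <-.
have Hm : is_max (sval h).1 by apply: half_max; rewrite En.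
case Ej: ((sval h).2) => [|j].
  exists (inl (inr b0)); split => //=; last by rewrite En.
  have Hne := is_max_ne Hm.
  have := Hm; rewrite (is_maxE2 b0 Hne) En /= => /and4P[_ _ -> _].
  by rewrite andbT -Hg geE Ej (pv_nth_s b0 Hm) ?En.
have Hj : j < size (sval h).1.2 by rewrite -Ej.
exists (inl (inl (nth b0 (sval h).1.2 j))); split => //=.
  by rewrite -Hg geE Ej (pv_nth_t b0 Hj).
split; rewrite ?Ej //; by apply: set_nth_default.
Qed.

Lemma triv_half (h : GHalf Q) : (sval h).1.2 = [::] ->
  sval h = (((sval h).1.1, [::]), 0).
Proof.
have Hl := half_lt h.
case: (sval h) Hl => [[v p] j] /= Hl Ep; subst p; congr pair.
by move: Hl; case: j.
Qed.

Lemma RS_fun i x (h h' : GHalf Q) : RSl i x h -> RSl i x h' -> h = h'.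
Proof.
move=> [Hv Hg H] [_ Hg' H']; apply: ghalf_eq.
move: H H'; case: x Hv => [[a|b]|[]] /= Hv.
- move=> [J0 J1 J2] [J0' J1' J2'].
  have Hm : is_max (sval h).1 by apply: half_max; case: ((sval h).1.2) J1.
  have Hm' : is_max (sval h').1 by apply: half_max; case: ((sval h').1.2) J1'.
  have [E1 E2] := pos_uniq Hm Hm' J1 J1' J2 J2'.
  move: E1 E2 J0 J0'; case: (sval h) => [? [|?]]; case: (sval h') => [? [|?]] //=.
  by move=> -> ->.
- move=> [J0 J1 J2] [J0' J1' J2'].
  have Hm : is_max (sval h).1 by apply: half_max; case: ((sval h).1.2) J1.
  have Hm' : is_max (sval h').1 by apply: half_max; case: ((sval h').1.2) J1'.
  have [E1 _] := pos_uniq Hm Hm' J1 J1' J2 J2'.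
  by move: E1 J0 J0'; case: (sval h) => [? ?]; case: (sval h') => [? ?] /= -> -> ->.
- move=> E1 E1'; rewrite (triv_half E1) (triv_half E1').
  move: Hg Hg'; rewrite !geE (triv_half E1) (triv_half E1') /= => -> ->.
  by [].
Qed.

Lemma RS_inj i x x' (h : GHalf Q) : RSl i x h -> RSl i x' h -> x = x'.
Proof.
move=> [_ _ H] [_ _ H'].
move: H H'; case: x => [[a|b]|[]]; case: x' => [[a'|b']|[]] //=.
- move=> [_ J1 J2] [_ _ J2'].
  by have := set_nth_default a' a J1; rewrite J2 J2' => ->.
- by move=> [J0 _ _] [J0' _ _]; rewrite J0' in J0.
- by move=> [_ J1 _] E1; rewrite E1 in J1.
- by move=> [J0 _ _] [J0' _ _]; rewrite J0 in J0'.
- move=> [_ J1 J2] [_ _ J2'].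
  by have := set_nth_default b' b J1; rewrite J2 J2' => ->.
- by move=> [_ J1 _] E1; rewrite E1 in J1.
- by move=> E1 [_ J1 _]; rewrite E1 in J1.
- by move=> E1 [_ J1 _]; rewrite E1 in J1.
Qed.

Lemma two_halves i : #|valid i| = 2 -> exists h1 h2,
  [/\ h1 <> h2, Defs.ge h1 = i, Defs.ge h2 = i &
      forall h, Defs.ge h = i -> h = h1 \/ h = h2].
Proof.
move=> Hc; have U := enum_uniq (valid i).
have Sz : size (enum (valid i)) = 2 by rewrite -cardE.
have Mem x : (x \in enum (valid i)) = valid i x by rewrite mem_enum.
case Ee: (enum (valid i)) U Sz Mem => [|x1 [|x2 [|x3 l]]] // U _ Mem.
have V1 : valid i x1 by rewrite -Mem inE eqxx.
have V2 : valid i x2 by rewrite -Mem !inE eqxx orbT.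
have [h1 R1] := RS_ex_h V1; have [h2 R2] := RS_ex_h V2.
exists h1, h2; split.
- move=> E12; subst h2; have := RS_inj R1 R2 => E12; subst x2.
  by move: U; rewrite /= inE eqxx.
- by case: R1.
- by case: R2.
- move=> h Hg; have [x [Vx Hx Rx]] := RS_ex_x Hg.
  have Rx' : RSl i x h by [].
  move: Vx; rewrite -Mem !inE => /orP[/eqP Ex|/eqP Ex]; subst x.
  + by left; apply: RS_fun Rx' R1.
  + by right; apply: RS_fun Rx' R2.
Qed.

Lemma card_valid i : #|valid i| =
  #|[pred a | t a == i]| + #|[pred b | (s b == i) && init b]| + triv_cond i.
Proof.
rewrite -!sum1_card !big_sumType /=.
congr (_ + _ + _).
rewrite (eq_bigl (fun _ => triv_cond i)) //.
by case: (triv_cond i); [rewrite (big_pred1 tt) // => -[] | rewrite big_pred0].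
Qed.

Lemma inj_le (T U : finType) (A : {set T}) (B : {set U}) (f : T -> U) :
  (forall x y, x \in A -> y \in A -> f x = f y -> x = y) ->
  (forall x, x \in A -> f x \in B) -> #|A| <= #|B|.
Proof.
move=> Hi Hm; rewrite -(card_in_imset (f := f)); last by move=> x y Hx Hy; apply: Hi.
by apply: subset_leq_card; apply/subsetP => y /imsetP[x Hx ->]; apply: Hm.
Qed.

Lemma count_facts i : exists nNR nRS,
  [/\ nNR + nRS = indeg i * outdeg i, nNR <= indeg i, nNR <= outdeg i,
      nRS <= indeg i & nRS <= outdeg i] /\
   #|[pred b | (s b == i) && init b]| + nNR = outdeg i /\
   triv_cond i = [|| (outdeg i == 0) && (indeg i == 1),
      (indeg i == 0) && (outdeg i == 1) |
      [&& indeg i == 1, outdeg i == 1 & 0 < nNR]].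
Proof.
set In := [set a | t a == i]; set Out := [set b | s b == i].
have cI : #|In| = indeg i by rewrite cardsE.
have cO : #|Out| = outdeg i by rewrite cardsE.
set A := setX In Out; set B := [set x : Ar * Ar | ~~ grl x.1 x.2].
set NR := A :&: B; set RS := A :\: B.
have mNR x : (x \in NR) = [&& t x.1 == i, s x.2 == i & ~~ grl x.1 x.2].
  by case: x => a b; rewrite !inE /= andbA.
have mRS x : (x \in RS) = [&& t x.1 == i, s x.2 == i & grl x.1 x.2].
  by case: x => a b; rewrite !inE /= negbK andbC andbA.
exists #|NR|, #|RS|; split; first split.
- by rewrite cardsID cardsX cI cO.
- rewrite -cI; apply: (inj_le (f := fst)).
    move=> [a b] [a' b'] /=; rewrite !mNR /= => /and3P[H1 H2 H3] /and3P[H1' H2' H3'] Ea.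
    subst a'; congr pair; apply: (E_r (a := a)); rewrite /E ?H3 ?H3' //.
    + by rewrite andbT (eqP H1) (eqP H2).
    + by rewrite andbT (eqP H1) (eqP H2').
  by move=> [a b]; rewrite mNR inE => /and3P[].
- rewrite -cO; apply: (inj_le (f := snd)).
    move=> [a b] [a' b'] /=; rewrite !mNR /= => /and3P[H1 H2 H3] /and3P[H1' H2' H3'] Eb.
    subst b'; congr pair; apply: (E_l (a := b)); rewrite /E ?H3 ?H3' //.
    + by rewrite andbT (eqP H1) (eqP H2).
    + by rewrite andbT (eqP H1') (eqP H2).
  by move=> [a b]; rewrite mNR inE => /and3P[].
- rewrite -cI; apply: (inj_le (f := fst)).
    move=> [a b] [a' b'] /=; rewrite !mRS /= => /and3P[H1 H2 H3] /and3P[H1' H2' H3'] Ea.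
    by subst a'; congr pair; apply: (rel_r H3 H3').
  by move=> [a b]; rewrite mRS inE => /and3P[].
- rewrite -cO; apply: (inj_le (f := snd)).
    move=> [a b] [a' b'] /=; rewrite !mRS /= => /and3P[H1 H2 H3] /and3P[H1' H2' H3'] Eb.
    by subst b'; congr pair; apply: (rel_l H3 H3').
  by move=> [a b]; rewrite mRS inE => /and3P[].
split.
- have -> : #|[pred b | (s b == i) && init b]| = #|Out :&: [set b | init b]|.
    by apply: eq_card => b; rewrite !inE.
  have -> : #|NR| = #|Out :\: [set b | init b]|.
    rewrite -(card_in_imset (f := snd) (D := mem NR)).
      apply: eq_card => b; rewrite !inE; apply/imsetP/idP.
        move=> [[a b'] Hx ->] /=; move: Hx; rewrite mNR => /and3P[H1 H2 H3].
        rewrite H2 andbT; apply/negP => Hi; apply: (initP Hi (c := a)).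
        by rewrite /E H3 (eqP H1) (eqP H2) eqxx.
      case/andP => Hn Hs; have [c Hc] := initPn Hn.
      exists (c, b) => //; rewrite mNR /= Hs.
      by case/andP: Hc => /eqP -> ->; rewrite (eqP Hs) eqxx.
    move=> [a b] [a' b'] /=; rewrite !mNR /= => /and3P[H1 H2 H3] /and3P[H1' H2' H3'] Eb.
    subst b'; congr pair; apply: (E_l (a := b)); rewrite /E ?H3 ?H3' //.
    + by rewrite andbT (eqP H1) (eqP H2).
    + by rewrite andbT (eqP H1') (eqP H2).
  by rewrite -cO (cardsID [set b | init b] Out).
- rewrite /triv_cond; congr (_ || (_ || _)); congr (_ && (_ && _)).
  apply/existsP/card_gt0P.
    move=> [a /existsP[b Hab]]; exists (a, b); by rewrite mNR.
  by move=> [[a b]]; rewrite mNR => Hab; exists a; apply/existsP; exists b.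
Qed.

Lemma deg_le2 (i : V) : indeg i <= 2 /\ outdeg i <= 2.
Proof. by case: HQ => _ _ _ [H _ _]; apply: H. Qed.

Lemma deg_pos (i : V) : 0 < #|Ar| -> 0 < indeg i + outdeg i.
Proof.
case/card_gt0P => a0 _.
case: HQ => Hc _ _ _.
have := Hc i (s a0); case/connectP => -[|y p] /=.
  move=> _ Ei; rewrite /= in Ei; rewrite -Ei; rewrite addn_gt0; apply/orP; right.
  by apply/card_gt0P; exists a0; rewrite inE.
case/andP => /existsP[a /orP[/andP[/eqP Hs _]|/andP[_ /eqP Ht]]] _ _; rewrite addn_gt0.
  by apply/orP; right; apply/card_gt0P; exists a; rewrite inE Hs.
by apply/orP; left; apply/card_gt0P; exists a; rewrite inE Ht.
Qed.

Lemma valid2 (i : V) : 0 < #|Ar| -> #|valid i| = 2.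
Proof.
move=> HA; have Hp := deg_pos i HA; have [Hd1 Hd2] := deg_le2 i.
have [nNR [nRS [[H1 H2 H3 H4 H5] [H6 H7]]]] := count_facts i.
rewrite card_valid H7 -[#|[pred a | t a == i]|]/(indeg i); clear H7.
move: (#|[pred b | (s b == i) && init b]|) H6 => nI H6.
move: (indeg i) (outdeg i) H1 H2 H3 H4 H5 H6 Hp Hd1 Hd2 => a b H1 H2 H3 H4 H5 H6 Hp Hd1 Hd2.
case: a H1 H2 H3 H4 H5 H6 Hp Hd1 Hd2 => [|[|[|a]]]; case: b => [|[|[|b]]] //=;
  case: nNR => [|nNR] /=; lia.
Qed.

Lemma gamma_conn (P : GVert Q -> Prop) :
  (forall h h' : GHalf Q, Defs.ge h = Defs.ge h' -> P (gv h) -> P (gv h')) ->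
  forall v w, P v -> P w.
Proof.
move=> HP.
pose Pq (j : V) := forall h : GHalf Q, Defs.ge h = j -> P (gv h).
have H0 (v : GVert Q) : in_Mbar (sval v) && (0 < size (pverts (sval v))).
  by rewrite (svalP v) size_pv.
have G0 (v : GVert Q) : gv (mkH (H0 v)) = v by apply: gvert_eq.
have E0 (v : GVert Q) : Defs.ge (mkH (H0 v)) = (sval v).1 by [].
have Ha (a : Ar) : Pq (s a) <-> Pq (t a).
  have [m [j [Hm Hj Hn]]] := exists_half a.
  have Ps : in_Mbar m && (j < size (pverts m)).
    by rewrite in_MbarE ?(is_max_ne Hm) // Hm size_pv ltnW.
  have Pt : in_Mbar m && (j.+1 < size (pverts m)).
    by rewrite in_MbarE ?(is_max_ne Hm) // Hm size_pv.
  have Es : Defs.ge (mkH Ps) = s a by have := pv_nth_s a Hm Hj; rewrite Hn.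
  have Et : Defs.ge (mkH Pt) = t a by rewrite geE /= (nth_map a) // Hn.
  have Gst : gv (mkH Ps) = gv (mkH Pt) by apply: gvert_eq.
  split=> H h Hh.
    apply: (HP (mkH Pt)); first by rewrite Hh.
    by rewrite -Gst; apply: H.
  apply: (HP (mkH Ps)); first by rewrite Hh.
  by rewrite Gst; apply: H.
move=> v w Pv.
have Pqv : Pq (sval v).1.
  by move=> h Hh; apply: (HP (mkH (H0 v))); [rewrite Hh | rewrite G0].
case: HQ => Hc _ _ _.
have := Hc (sval v).1 (sval w).1; case/connectP => p Hp Hl.
suff : Pq (sval w).1 by move/(_ (mkH (H0 w)) (E0 w)); rewrite G0.
rewrite Hl; elim: p (sval v).1 Hp Pqv {Hl} => [|y p IH] x //= /andP[Hxy Hp] Hx.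
apply: IH Hp _.
case/existsP: Hxy => a /orP[/andP[/eqP Hs /eqP Ht]|/andP[/eqP Hs /eqP Ht]].
  by rewrite -Ht; apply/Ha; rewrite Hs.
by rewrite -Hs; apply/Ha; rewrite Ht.
Qed.

End G.

Lemma rel_bij (A B : Type) (R : A -> B -> Prop) :
  (forall a, exists b, R a b) -> (forall b, exists a, R a b) ->
  (forall a b b', R a b -> R a b' -> b = b') ->
  (forall a a' b, R a b -> R a' b -> a = a') ->
  exists f : A -> B, bijective f /\ forall a, R a (f a).
Proof.
move=> Hab Hba Hf Hi.
pose f a := proj1_sig (constructive_indefinite_description _ (Hab a)).
pose g b := proj1_sig (constructive_indefinite_description _ (Hba b)).
have Rf a : R a (f a) by rewrite /f; case: constructive_indefinite_description.
have Rg b : R (g b) b by rewrite /g; case: constructive_indefinite_description.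
exists f; split=> //; exists g.
- by move=> a; apply: (Hi _ _ (f a)).
- by move=> b; apply: (Hf (g b)).
Qed.

Theorem lemma3p3 (k : closedFieldType) (Q : bquiver) (HQ : gentle Q) :
  (0 < #|qA Q| ->
     brauer_graph (@gv Q) (@ge Q) (@gsucc Q) (fun _ : GVert Q => 1%N)) /\
  same_quiver (@qe_src Q) (@qe_tgt Q)
    (@ba_src _ _ _ (@gv Q) (@ge Q) (fun _ : GVert Q => 1%N))
    (@ba_tgt _ _ _ (@gv Q) (@ge Q) (@gsucc Q) (fun _ : GVert Q => 1%N)).
Proof.
split.
- move=> HA; split.
  + move=> e; have [h1 [h2 [N12 E1 E2 Hall]]] := two_halves HQ (valid2 HQ e HA).
    by exists h1, h2; split.
  + exact: gsucc_bij.
  + exact: gv_succ.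
  + exact: gv_trans.
  + by split => // P; apply: gamma_conn.
- have [f [Hf HR]] := rel_bij (RR_ex_b HQ) (@RR_ex_a Q) (RR_fun HQ) (@RR_inj Q).
  exists f; split => // a; have [E1 E2] := RR_st (HR a); by split.
Qed.
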